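(* Let $C$ be a basic $k$-coalgebra and $A,B$ subcoalgebras of $C$. (a) A complete set of pairwise non-isomorphic simple right $A\wedge^C B$-comodules is the union of a complete set of simple right $A$-comodules and a complete set of simple right $B$-comodules; i.e. every simple subcoalgebra of $A\wedge^C B$ lies in $A$ or in $B$. (b) For simple subcoalgebras $S,T$ of $A\wedge^C B$: $S\wedge^{A\wedge^C B}T=S\oplus T$ if $S\not\subseteq A$ and $T\not\subseteq B$; $S\wedge^{A\wedge^C B}T=S\wedge^C T$ if $S\subseteq A$ and $T\subseteq B$; $S\wedge^{A\wedge^C B}T=S\wedge^A T$ if $S\subseteq A$ and $T\not\subseteq B$; $S\wedge^{A\wedge^C B}T=S\wedge^B T$ if $S\not\subseteq A$ and $T\subseteq B$. *)

(* Defs.v *)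
(* Tensors in V (x) V are presented
   as finite sums of simple tensors (seq (V * V)); statements about tensors
   are made through the pairing with pairs of linear functionals, i.e. via
   the dual algebra C^*, as in Sweedler's X /\ Y = (X^perp Y^perp)^perp. *)
From HB Require Import structures.
From mathcomp Require Import all_boot all_order all_algebra.
Set Implicit Arguments. Unset Strict Implicit. Unset Printing Implicit Defensive.
Import Order.TTheory GRing.Theory Num.Theory.
Local Open Scope ring_scope.

Section Coalg.
Variables (k : fieldType) (V : lmodType k).

Definition lfun (f : V -> k) : Prop :=
  forall (a : k) (u v : V), f (a *: u + v) = a * f u + f v.

Definition tpair (f g : V -> k) (t : seq (V * V)) : k :=
  \sum_(p <- t) f p.1 * g p.2.

Definition perp (X : V -> Prop) (f : V -> k) : Prop :=
  forall x, X x -> f x = 0.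

(* t \in X (x) Y *)
Definition in_tensor (X Y : V -> Prop) (t : seq (V * V)) : Prop :=
  forall f g, lfun f -> lfun g -> (perp X f \/ perp Y g) -> tpair f g t = 0.

(* t \in X (x) V + V (x) Y *)
Definition in_tsum (X Y : V -> Prop) (t : seq (V * V)) : Prop :=
  forall f g, lfun f -> lfun g -> perp X f -> perp Y g -> tpair f g t = 0.

Definition subspace (X : V -> Prop) : Prop :=
  X 0 /\ forall (a : k) u v, X u -> X v -> X (a *: u + v).

Definition vincl (X Y : V -> Prop) : Prop := forall x, X x -> Y x.

Definition vsame (X Y : V -> Prop) : Prop := forall x, X x <-> Y x.

Definition vsum (X Y : V -> Prop) : V -> Prop :=
  fun v => exists x y, X x /\ Y y /\ v = x + y.

End Coalg.

Record coalgebra (k : fieldType) (V : lmodType k) := Coalgebra {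
  cm : V -> seq (V * V);
  ce : V -> k;
  ce_lin : lfun ce;
  cm_lin : forall f g, lfun f -> lfun g -> lfun (fun c => tpair f g (cm c));
  cm_coassoc : forall f g h c, lfun f -> lfun g -> lfun h ->
    \sum_(p <- cm c) tpair f g (cm p.1) * h p.2
    = \sum_(p <- cm c) f p.1 * tpair g h (cm p.2);
  cm_counitl : forall c, \sum_(p <- cm c) ce p.1 *: p.2 = c;
  cm_counitr : forall c, \sum_(p <- cm c) ce p.2 *: p.1 = c
}.

Section CoalgDefs.
Variables (k : fieldType) (V : lmodType k) (C : coalgebra V).

Definition subcoalg (D : V -> Prop) : Prop :=
  subspace D /\ forall c, D c -> in_tensor D D (cm C c).

Definition simple_subcoalg (S : V -> Prop) : Prop :=
  [/\ subcoalg S, exists x, S x /\ x <> 0 &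
      forall T, subcoalg T -> vincl T S ->
        (forall x, T x -> x = 0) \/ vsame T S].

(* wedge relative to a subcoalgebra D:
   X /\^D Y = Delta_D^{-1}(X (x) D + D (x) Y), using
   X (x) D + D (x) Y = (X (x) C + C (x) Y) \cap (D (x) D). *)
Definition wedge (D X Y : V -> Prop) : V -> Prop :=
  fun c => [/\ D c, in_tensor D D (cm C c) & in_tsum X Y (cm C c)].

Definition conv (f g : V -> k) : V -> k := fun c => tpair f g (cm C c).

(* C is basic: for every simple subcoalgebra S, the dual algebra S^* is a
   division algebra.  Functionals on S are represented by functionals on C
   (restriction is onto); f is nonzero in S^* iff it does not vanish on S,
   and the unit of S^* is epsilon restricted to S. *)
Definition basic : Prop :=
  forall S, simple_subcoalg S ->
  forall f, lfun f -> (exists s, S s /\ f s <> 0) ->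
  exists g, lfun g /\
    forall s, S s -> conv f g s = ce C s /\ conv g f s = ce C s.

End CoalgDefs.

(* Main.v *)
Require Import Defs.
From HB Require Import structures.
From mathcomp Require Import all_boot all_order all_algebra.
From Stdlib Require Import Classical ClassicalEpsilon FunctionalExtensionality PropExtensionality.
Local Open Scope ring_scope.

Module Helpers.
Set Implicit Arguments. Unset Strict Implicit. Unset Printing Implicit Defensive.
Import Order.TTheory GRing.Theory Num.Theory.

Section Zorn.
Variable X : Type.
Definition psub (G H : X -> Prop) := forall x, G x -> H x.
Definition pchain (C : (X -> Prop) -> Prop) :=
  forall G H, C G -> C H -> psub G H \/ psub H G.
Variable R0 : X -> Prop.
Definition psup (C : (X -> Prop) -> Prop) : X -> Prop :=
  fun x => R0 x \/ exists G, C G /\ G x.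

Lemma pext (G H : X -> Prop) : psub G H -> psub H G -> G = H.
Proof.
intros h1 h2; apply functional_extensionality; intro x;
apply propositional_extensionality; split; auto.
Qed.

Section Tower.
Variable Z : (X -> Prop) -> Prop.
Variable next : (X -> Prop) -> (X -> Prop).
Hypothesis HZR : forall G, Z G -> psub R0 G.
Hypothesis Hnext : forall M, Z M -> Z (next M) /\ psub M (next M).
Hypothesis Hsup : forall C, (forall G, C G -> Z G) -> pchain C -> Z (psup C).

Inductive tower : (X -> Prop) -> Prop :=
| tw_next M : tower M -> tower (next M)
| tw_sup C : pchain C -> (forall G, C G -> tower G) -> tower (psup C).

Lemma towerZ M : tower M -> Z M.
Proof.
induction 1 as [M _ IH | C hc _ IH].
- exact (proj1 (Hnext IH)).
- apply Hsup; auto.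
Qed.

Definition extr M := forall G, tower G -> psub G M -> ~ psub M G -> psub (next G) M.

Lemma L1 M : tower M -> extr M -> forall G, tower G -> psub G M \/ psub (next M) G.
Proof.
intros tM eM G tG; induction tG as [G0 tG0 IH | C hc tC IH].
- destruct IH as [h | h].
  + destruct (classic (psub M G0)) as [h2 | h2].
    * rewrite (pext h h2). right; intros x hx; exact hx.
    * left; exact (eM G0 tG0 h h2).
  + right; intros x hx; apply (proj2 (Hnext (towerZ tG0))); auto.
- destruct (classic (exists H, C H /\ ~ psub H M)) as [[H [hH nH]] | hn].
  + destruct (IH H hH) as [h | h]; [contradiction|].
    right; intros x hx; right; exists H; auto.
  + left; intros x [hx | [H [hH hx]]].
    * exact (HZR (towerZ tM) hx).
    * destruct (classic (psub H M)) as [h|h]; [auto|].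
      exfalso; apply hn; exists H; auto.
Qed.

Lemma L2 M : tower M -> extr M.
Proof.
induction 1 as [M0 tM0 IH | C hc tC IH].
- intros G tG h1 h2.
  destruct (L1 tM0 IH tG) as [h | h]; [|contradiction].
  destruct (classic (psub M0 G)) as [h3 | h3].
  + rewrite (pext h h3). intros x hx; exact hx.
  + intros x hx; apply (proj2 (Hnext (towerZ tM0))); exact (IH G tG h h3 x hx).
- intros G tG h1 h2.
  destruct (classic (exists H, C H /\ ~ psub (next H) G)) as [[H [hH nH]] | hn].
  + destruct (L1 (tC H hH) (IH H hH) tG) as [h | h]; [|contradiction].
    destruct (classic (psub H G)) as [h3 | h3].
    * assert (E := pext h h3); subst G.
      destruct (classic (exists H', C H' /\ ~ psub H' H)) as [[H' [hH' nH']] | hn'].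
      -- destruct (hc H H' hH hH') as [h4 | h4]; [|contradiction].
         intros x hx; right; exists H'; split; auto.
         exact (IH H' hH' H (tC H hH) h4 nH' x hx).
      -- exfalso; apply h2; intros x [hx | [H' [hH' hx]]].
         ++ exact (HZR (towerZ tG) hx).
         ++ destruct (classic (psub H' H)) as [h5|h5]; [auto|].
            exfalso; apply hn'; exists H'; auto.
    * intros x hx; right; exists H; split; auto.
      exact (IH H hH G tG h h3 x hx).
  + exfalso; apply h2; intros x [hx | [H [hH hx]]].
    * exact (HZR (towerZ tG) hx).
    * destruct (classic (psub (next H) G)) as [h5|h5].
      -- apply h5; apply (proj2 (Hnext (towerZ (tC H hH)))); exact hx.
      -- exfalso; apply hn; exists H; auto.
Qed.

Lemma tower_chain : pchain tower.
Proof.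
intros M G tM tG.
destruct (L1 tM (L2 tM) tG) as [h | h]; [right; exact h|].
left; intros x hx; apply h; apply (proj2 (Hnext (towerZ tM))); exact hx.
Qed.

Lemma tower_top : tower (psup tower).
Proof. apply tw_sup; [exact tower_chain | auto]. Qed.

End Tower.

Theorem zorn (Z : (X -> Prop) -> Prop) :
  (forall G, Z G -> psub R0 G) ->
  (forall C, (forall G, C G -> Z G) -> pchain C -> Z (psup C)) ->
  exists M, Z M /\ forall G, Z G -> psub M G -> psub G M.
Proof.
intros HZR Hsup.
apply NNPP; intro hno.
assert (hex : forall M, exists G, Z M -> Z G /\ psub M G /\ ~ psub G M).
{ intro M. destruct (classic (Z M)) as [hM | hM].
  - apply NNPP; intro h. apply hno; exists M; split; auto.
    intros G hG hMG. apply NNPP; intro h2. apply h; exists G; auto.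
  - exists M; intro; contradiction. }
set (next := fun M => proj1_sig (constructive_indefinite_description _ (hex M))).
assert (hn : forall M, Z M -> Z (next M) /\ psub M (next M) /\ ~ psub (next M) M).
{ intros M hM; unfold next; destruct (constructive_indefinite_description _ (hex M)) as [G hG]; simpl; auto. }
assert (Hnext : forall M, Z M -> Z (next M) /\ psub M (next M)).
{ intros M hM; destruct (hn M hM) as [a [b _]]; auto. }
pose proof (@tower_top Z next HZR Hnext Hsup) as tT.
pose proof (tw_next tT) as tN.
destruct (hn _ (@towerZ Z next Hnext Hsup _ tT)) as [_ [_ hbad]].
apply hbad; intros x hx; right; exists (next (psup (tower next))); auto.
Qed.
End Zorn.

Section Ext.
Variables (k : fieldType) (V : lmodType k).

Definition good (G : V * k -> Prop) :=
  [/\ (forall u a b, G (u,a) -> G (u,b) -> a = b), G (0,0) &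
      (forall c u v a b, G (u,a) -> G (v,b) -> G (c *: u + v, c * a + b))].

Lemma sup_two (R : V * k -> Prop) C : good R ->
  (forall G, C G -> good G /\ psub R G) -> pchain C ->
  forall x y, psup R C x -> psup R C y ->
  exists H, [/\ good H, H x, H y & psub H (psup R C)].
Proof.
move=> gR hC ch x y hx0 hy0.
have subm : forall G, C G -> psub G (psup R C) by move=> G cG z hz; right; exists G.
case: hx0 => [hx|[G [cG hx]]]; case: hy0 => [hy|[H [cH hy]]].
- by exists R; split=> // z hz; left.
- have [gH sH] := hC H cH; exists H; split=> //; [exact: sH | exact: subm].
- have [gG sG] := hC G cG; exists G; split=> //; [exact: sG | exact: subm].
- have [gG sG] := hC G cG; have [gH sH] := hC H cH.
  case: (ch G H cG cH) => s.
  + by exists H; split=> //; [apply: s | exact: subm].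
  + by exists G; split=> //; [apply: s | exact: subm].
Qed.

Theorem extension (R : V * k -> Prop) : good R ->
  exists F, lfun F /\ forall u a, R (u,a) -> F u = a.
Proof.
move=> gR.
have [M [[gM sM] maxM]] : exists M, (good M /\ psub R M) /\
   forall G, good G /\ psub R G -> psub M G -> psub G M.
  apply: (@zorn _ R (fun G => good G /\ psub R G)).
  - by move=> G [].
  - move=> C hC ch; split; last by move=> x hx; left.
    have st := sup_two gR hC ch.
    split.
    + move=> u a b h1 h2; have [H [[fH _ _] h1' h2' _]] := st _ _ h1 h2.
      exact: fH h1' h2'.
    + by left; case: gR.
    + move=> c u v a b h1 h2; have [H [[_ _ cH] h1' h2' sH]] := st _ _ h1 h2.
      exact: sH (cH _ _ _ _ _ h1' h2').
case: gM => fM M0 cM.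
have tot : forall u, exists a, M (u, a).
  move=> v; apply: NNPP => nv.
  pose G' := fun p : V * k => exists u b c, [/\ M (u, b), p.1 = u + c *: v & p.2 = b].
  have gG' : good G' /\ psub R G'.
    split; last first.
      by move=> [u a] hr; exists u, a, 0; split=> //=; [exact: sM | rewrite scale0r addr0].
    split.
    - move=> w a b [u1 [b1 [c1 [h1 e1 e1']]]] [u2 [b2 [c2 [h2 e2 e2']]]].
      simpl in *; subst.
      have [ec|nc] := eqVneq c1 c2.
        subst; move/addIr: e2 => eu; subst; exact: fM h1 h2.
      exfalso; apply: nv.
      have h3 := cM (-1) _ _ _ _ h1 h2.
      have h4 := cM ((c1 - c2)^-1) _ _ _ _ h3 M0.
      exists ((c1 - c2)^-1 * (-1 * b1 + b2) + 0).
      suff -> : v = (c1 - c2)^-1 *: (-1 *: u1 + u2) + 0 by [].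
      have e3 : -1 *: u1 + u2 = (c1 - c2) *: v.
        have -> : u2 = u1 + c1 *: v - c2 *: v by rewrite e2 addrK.
        by rewrite scaleN1r -addrA addKr -scalerBl.
      rewrite e3 addr0 scalerA mulVf ?scale1r //.
      by rewrite subr_eq0.
    - by exists 0, 0, 0; rewrite scale0r addr0.
    - move=> c w1 w2 a1 a2 [u1 [b1 [c1 [h1 e1 e1']]]] [u2 [b2 [c2 [h2 e2 e2']]]].
      simpl in *; subst.
      exists (c *: u1 + u2), (c * b1 + b2), (c * c1 + c2); split=> //=.
      + exact: cM.
      + by rewrite scalerDr scalerA scalerDl !addrA; congr (_ + _); rewrite addrAC.
  have := maxM G' gG'.
  have sMG : psub M G' by move=> [u a] hm; exists u, a, 0; rewrite /= scale0r addr0.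
  move=> /(_ sMG (v, 0)) h; apply: nv; exists 0; apply: h.
  by exists 0, 0, 1; rewrite /= scale1r add0r.
pose F u := proj1_sig (constructive_indefinite_description _ (tot u)).
have FM : forall u, M (u, F u).
  by move=> u; rewrite /F; case: (constructive_indefinite_description _ _).
exists F; split.
- move=> a u v; apply: fM (FM _) _; exact: cM (FM _) (FM _).
- by move=> u a hr; apply: fM (FM _) (sM _ hr).
Qed.
End Ext.

Section Lin.
Variables (k : fieldType) (V : lmodType k).
Implicit Types (f g : V -> k) (X Y : V -> Prop).

Lemma lfun0 f : lfun f -> f 0 = 0.
Proof.
move=> H; have := H 1 0 0; rewrite scale1r addr0 mul1r => /eqP.
by rewrite -subr_eq0 opprD addrA subrr sub0r oppr_eq0 => /eqP.
Qed.

Lemma lfunD f u v : lfun f -> f (u + v) = f u + f v.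
Proof. by move=> H; have := H 1 u v; rewrite scale1r mul1r. Qed.

Lemma lfunZ f a u : lfun f -> f (a *: u) = a * f u.
Proof. by move=> H; have := H a u 0; rewrite addr0 (lfun0 H) addr0. Qed.

Lemma lfunN f u : lfun f -> f (- u) = - f u.
Proof. by move=> H; rewrite -scaleN1r lfunZ // mulN1r. Qed.

Lemma lfunB f u v : lfun f -> f (u - v) = f u - f v.
Proof. by move=> H; rewrite lfunD // lfunN. Qed.

Lemma lfun_sum f (I : Type) (t : seq I) (F : I -> V) : lfun f ->
  f (\sum_(p <- t) F p) = \sum_(p <- t) f (F p).
Proof.
move=> H; elim: t => [|p t IH]; first by rewrite !big_nil lfun0.
by rewrite !big_cons lfunD // IH.
Qed.

Lemma subspaceB X u v : subspace X -> X u -> X v -> X (u - v).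
Proof.
move=> [X0 Xc] hu hv.
have := Xc (-1) v u hv hu; rewrite scaleN1r addrC; done.
Qed.

Lemma subspaceD X u v : subspace X -> X u -> X v -> X (u + v).
Proof. by move=> [X0 Xc] hu hv; have := Xc 1 u v hu hv; rewrite scale1r. Qed.

Lemma subspaceZ X a u : subspace X -> X u -> X (a *: u).
Proof. by move=> [X0 Xc] hu; have := Xc a u 0 hu X0; rewrite addr0. Qed.

Lemma separation X v : subspace X -> ~ X v ->
  exists f, [/\ lfun f, perp X f & f v = 1].
Proof.
move=> sX nv.
pose R := fun p : V * k => exists x c, [/\ X x, p.1 = x + c *: v & p.2 = c].
have gR : good R.
  split.
  - move=> w a b [x1 [c1 [h1 e1 e1']]] [x2 [c2 [h2 e2 e2']]]; simpl in *; subst.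
    have [//|nc] := eqVneq c1 c2.
    exfalso; apply: nv.
    have e3 : x2 - x1 = (c1 - c2) *: v.
      have -> : x2 = x1 + c1 *: v - c2 *: v by rewrite e2 addrK.
      by rewrite addrAC [x1 + _]addrC addrK scalerBl.
    have -> : v = (c1 - c2)^-1 *: (x2 - x1).
      by rewrite e3 scalerA mulVf ?scale1r // subr_eq0.
    by apply: subspaceZ => //; apply: subspaceB.
  - by exists 0, 0; split=> //=; [case: sX | rewrite scale0r addr0].
  - move=> c u w a b [x1 [c1 [h1 e1 e1']]] [x2 [c2 [h2 e2 e2']]]; simpl in *; subst.
    exists (c *: x1 + x2), (c * c1 + c2); split=> //=.
    + by case: sX => _ Xc; apply: Xc.
    + by rewrite scalerDr scalerA scalerDl !addrA; congr (_ + _); rewrite addrAC.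
have [F [lF hF]] := extension gR.
exists F; split=> //.
- by move=> x hx; apply: hF; exists x, 0; rewrite /= scale0r addr0.
- by apply: hF; exists 0, 1; split=> //=; [case: sX | rewrite scale1r add0r].
Qed.

Lemma closedness X v : subspace X ->
  (forall f, lfun f -> perp X f -> f v = 0) -> X v.
Proof.
move=> sX H; apply: NNPP => nv.
have [f [lf pf fv]] := separation sX nv.
by move: (H f lf pf); rewrite fv => /eqP; rewrite oner_eq0.
Qed.

Lemma decomp X Y f : subspace X -> subspace Y -> lfun f ->
  (forall x, X x -> Y x -> f x = 0) ->
  exists f1 f2, [/\ lfun f1, lfun f2, perp X f1, perp Y f2 &
                   forall v, f v = f1 v + f2 v].
Proof.
move=> sX sY lf hf.
pose R := fun p : V * k => exists x y, [/\ X x, Y y, p.1 = x + y & p.2 = f y].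
have gR : good R.
  split.
  - move=> w a b [x1 [y1 [hx1 hy1 e1 e1']]] [x2 [y2 [hx2 hy2 e2 e2']]]; simpl in *; subst.
    have e3 : y1 - y2 = x2 - x1.
      by apply/eqP; rewrite subr_eq addrAC -e2 addrC addKr.
    apply/eqP; rewrite -subr_eq0 -lfunB // hf //; last by apply: subspaceB.
    by rewrite e3; apply: subspaceB.
  - by exists 0, 0; split=> //=; [case: sX | case: sY | rewrite addr0 | rewrite lfun0].
  - move=> c u w a b [x1 [y1 [hx1 hy1 e1 e1']]] [x2 [y2 [hx2 hy2 e2 e2']]]; simpl in *; subst.
    exists (c *: x1 + x2), (c *: y1 + y2); split=> //=.
    + by case: sX => _ Xc; apply: Xc.
    + by case: sY => _ Yc; apply: Yc.
    + by rewrite scalerDr !addrA; congr (_ + _); rewrite addrAC.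
have [F [lF hF]] := extension gR.
exists F, (fun v => f v - F v); split=> //.
- by move=> a u w; rewrite lf lF mulrBr opprD !addrA; congr (_ + _); rewrite addrAC.
- by move=> x hx; apply: hF; exists x, 0; split=> //=; [case: sY | rewrite addr0 | rewrite lfun0].
- move=> y hy; rewrite (hF y (f y)) ?subrr //.
  by exists 0, y; split=> //=; [case: sX | rewrite add0r].
- by move=> v; rewrite addrC subrK.
Qed.

End Lin.

Section Co.
Variables (k : fieldType) (V : lmodType k) (C : coalgebra V).
Implicit Types (f g h : V -> k) (X Y : V -> Prop) (t : seq (V * V)).

Lemma tpair_splitl f f1 f2 g t : (forall v, f v = f1 v + f2 v) ->
  tpair f g t = tpair f1 g t + tpair f2 g t.
Proof.
by move=> hf; rewrite /tpair -big_split; apply: eq_bigr => p _; rewrite hf mulrDl.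
Qed.

Lemma tpair_splitr f g g1 g2 t : (forall v, g v = g1 v + g2 v) ->
  tpair f g t = tpair f g1 t + tpair f g2 t.
Proof.
by move=> hg; rewrite /tpair -big_split; apply: eq_bigr => p _; rewrite hg mulrDr.
Qed.

Lemma counitL h c : lfun h -> h c = tpair (ce C) h (cm C c).
Proof.
move=> lh; rewrite -{1}(cm_counitl C c) lfun_sum //.
by apply: eq_bigr => p _; rewrite lfunZ.
Qed.

Lemma counitR h c : lfun h -> h c = tpair h (ce C) (cm C c).
Proof.
move=> lh; rewrite -{1}(cm_counitr C c) lfun_sum //.
by apply: eq_bigr => p _; rewrite lfunZ // mulrC.
Qed.

Definition rho g c := \sum_(p <- cm C c) g p.2 *: p.1.
Definition lam f c := \sum_(p <- cm C c) f p.1 *: p.2.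

Lemma rhoE f g c : lfun f -> f (rho g c) = tpair f g (cm C c).
Proof. by move=> lf; rewrite lfun_sum //; apply: eq_bigr => p _; rewrite lfunZ // mulrC. Qed.

Lemma lamE f g c : lfun g -> g (lam f c) = tpair f g (cm C c).
Proof. by move=> lg; rewrite lfun_sum //; apply: eq_bigr => p _; rewrite lfunZ. Qed.

Lemma conv_lin f g : lfun f -> lfun g -> lfun (conv C f g).
Proof. exact: cm_lin. Qed.

Lemma coassoc f g h c : lfun f -> lfun g -> lfun h ->
  tpair f (conv C g h) (cm C c) = tpair (conv C f g) h (cm C c).
Proof. by move=> lf lg lh; rewrite /tpair /conv (cm_coassoc C c lf lg lh). Qed.

Lemma in_tensor_True t : in_tensor (fun _ : V => True) (fun _ => True) t.
Proof.
move=> f g _ _ [pf|pg]; rewrite /tpair big1 // => p _.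
- by rewrite pf // mul0r.
- by rewrite pg // mulr0.
Qed.

Lemma in_tensor_mono X Y X' Y' t : vincl X X' -> vincl Y Y' ->
  in_tensor X Y t -> in_tensor X' Y' t.
Proof.
move=> sX sY H f g lf lg [pf|pg]; apply: H => //.
- by left => x hx; apply: pf; apply: sX.
- by right => x hx; apply: pg; apply: sY.
Qed.

Lemma in_tsum_mono X Y X' Y' t : vincl X X' -> vincl Y Y' ->
  in_tsum X Y t -> in_tsum X' Y' t.
Proof.
move=> sX sY H f g lf lg pf pg; apply: H => //.
- by move=> x hx; apply: pf; apply: sX.
- by move=> x hx; apply: pg; apply: sY.
Qed.

Lemma in_tensor_tsumL X Y X' Y' t : vincl X X' -> in_tensor X Y t -> in_tsum X' Y' t.
Proof. by move=> sX H f g lf lg pf pg; apply: H => //; left => x hx; apply: pf; apply: sX. Qed.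

Lemma in_tensor_tsumR X Y X' Y' t : vincl Y Y' -> in_tensor X Y t -> in_tsum X' Y' t.
Proof. by move=> sY H f g lf lg pf pg; apply: H => //; right => x hx; apply: pg; apply: sY. Qed.

Lemma tpair_cmD f g u v : lfun f -> lfun g ->
  tpair f g (cm C (u + v)) = tpair f g (cm C u) + tpair f g (cm C v).
Proof. by move=> lf lg; exact: (lfunD _ _ (cm_lin C lf lg)). Qed.

Lemma in_tsum_add X Y u v : in_tsum X Y (cm C u) -> in_tsum X Y (cm C v) ->
  in_tsum X Y (cm C (u + v)).
Proof. by move=> hu hv f g lf lg pf pg; rewrite tpair_cmD // hu // hv // addr0. Qed.

Lemma in_tensor_add X Y u v : in_tensor X Y (cm C u) -> in_tensor X Y (cm C v) ->
  in_tensor X Y (cm C (u + v)).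
Proof. by move=> hu hv f g lf lg p; rewrite tpair_cmD // hu // hv // addr0. Qed.

Lemma sub_subspace X : subcoalg C X -> subspace X.
Proof. by case. Qed.

Lemma inter_subcoalg X Y : subcoalg C X -> subcoalg C Y ->
  subcoalg C (fun x => X x /\ Y x).
Proof.
move=> [sX hX] [sY hY]; split.
  split; first by split; [case: sX | case: sY].
  move=> a u v [hu1 hu2] [hv1 hv2]; split.
  - by case: sX => _; apply.
  - by case: sY => _; apply.
move=> c [hcX hcY] f g lf lg [pf|pg].
- have [f1 [f2 [l1 l2 p1 p2 e]]] := decomp sX sY lf (fun x a b => pf x (conj a b)).
  rewrite (tpair_splitl _ _ e) (hX c hcX f1 g) // ?(hY c hcY f2 g) ?addr0 //; by [left | left].
- have [g1 [g2 [l1 l2 p1 p2 e]]] := decomp sX sY lg (fun x a b => pg x (conj a b)).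
  rewrite (tpair_splitr _ _ e) (hX c hcX f g1) // ?(hY c hcY f g2) ?addr0 //; by [right | right].
Qed.

Lemma simple_zero S Y : simple_subcoalg C S -> subcoalg C Y -> ~ vincl S Y ->
  forall x, S x -> Y x -> x = 0.
Proof.
move=> [sS _ hS] sY nSY x hx hy.
have [z|sm] := hS _ (inter_subcoalg sS sY) (fun x hh => proj1 hh).
- exact: z x (conj hx hy).
- by exfalso; apply: nSY => y hy'; have [_ ?] := proj2 (sm y) hy'.
Qed.

Definition W X Y := wedge C (fun _ => True) X Y.

Lemma wedge_coalg X Y c : subcoalg C X -> subcoalg C Y ->
  in_tsum X Y (cm C c) -> in_tensor (W X Y) (W X Y) (cm C c).
Proof.
move=> [_ hX] [_ hY] hc f g lf lg [pf|pg].
- rewrite -(rhoE g c lf); apply: pf; split=> //; first exact: in_tensor_True.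
  move=> f' h lf' lh pf' ph.
  have lc := conv_lin lf' lh.
  rewrite -/(conv C f' h (rho g c)) (rhoE _ _ lc) -coassoc //.
  apply: hc => //; first exact: conv_lin.
  by move=> y hy; rewrite /conv; apply: hY => //; left.
- rewrite -(lamE f c lg); apply: pg; split=> //; first exact: in_tensor_True.
  move=> f' h lf' lh pf' ph.
  have lc := conv_lin lf' lh.
  rewrite -/(conv C f' h (lam f c)) (lamE _ _ lc) coassoc //.
  apply: hc => //; first exact: conv_lin.
  by move=> y hy; rewrite /conv; apply: hX => //; right.
Qed.

End Co.

Section Main.
Variables (k : fieldType) (V : lmodType k) (C : coalgebra V).

Lemma zero_subspace : subspace (fun v : V => v = 0).
Proof. by split=> // a u v -> ->; rewrite scaler0 addr0. Qed.

Lemma vsum_subspace (X Y : V -> Prop) : subspace X -> subspace Y -> subspace (vsum X Y).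
Proof.
move=> [X0 Xc] [Y0 Yc]; split; first by exists 0, 0; rewrite addr0.
move=> a u v [x [y [hx [hy ->]]]] [x' [y' [hx' [hy' ->]]]].
exists (a *: x + x'), (a *: y + y'); split; first exact: Xc.
split; first exact: Yc.
by rewrite scalerDr !addrA; congr (_ + _); rewrite addrAC.
Qed.

Lemma partA A B S : subcoalg C A -> subcoalg C B -> simple_subcoalg C S ->
  vincl S (W C A B) -> vincl S A \/ vincl S B.
Proof.
move=> sA sB sS hSAB; apply: NNPP => H.
have [nA nB] := not_or_and _ _ H.
have zA := simple_zero sS sA nA; have zB := simple_zero sS sB nB.
case: sS => [[sSp hS] [x [hx nx]] _].
apply: nx; apply: (closedness zero_subspace) => f lf _.
rewrite (counitL C _ lf).
have [e1 [e2 [l1 l2 p1 p2 ee]]] :=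
  decomp sSp (sub_subspace sA) (ce_lin C) (fun y a b => etrans (f_equal _ (zA y a b)) (lfun0 (ce_lin C))).
rewrite (tpair_splitl _ _ ee) (hS x hx e1 f) ?add0r //; last by left.
have [f1 [f2 [m1 m2 q1 q2 ef]]] :=
  decomp sSp (sub_subspace sB) lf (fun y a b => etrans (f_equal _ (zB y a b)) (lfun0 lf)).
rewrite (tpair_splitr _ _ ef) (hS x hx e2 f1) ?add0r //; last by right.
by have [_ _ ts] := hSAB x hx; apply: ts.
Qed.

End Main.

End Helpers.
Import Helpers.
Import Order.TTheory GRing.Theory Num.Theory.

Theorem mainTheorem7 (k : fieldType) (V : lmodType k) (C : coalgebra V)
  (A B : V -> Prop) :
  basic C -> subcoalg C A -> subcoalg C B ->
  let AB := wedge C (fun _ => True) A B in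
  (* (a) *)
  (forall S, simple_subcoalg C S -> vincl S AB -> vincl S A \/ vincl S B) /\
  (* (b) *)
  (forall S T, simple_subcoalg C S -> vincl S AB ->
               simple_subcoalg C T -> vincl T AB ->
     (~ vincl S A -> ~ vincl T B ->
        vsame (wedge C AB S T) (vsum S T) /\ (forall x, S x -> T x -> x = 0)) /\
     (vincl S A -> vincl T B ->
        vsame (wedge C AB S T) (wedge C (fun _ => True) S T)) /\
     (vincl S A -> ~ vincl T B ->
        vsame (wedge C AB S T) (wedge C A S T)) /\
     (~ vincl S A -> vincl T B ->
        vsame (wedge C AB S T) (wedge C B S T))).
Proof.
move=> _ sA sB AB.
have hA : forall a, A a -> in_tensor A A (cm C a) by case: sA.
have hB : forall b, B b -> in_tensor B B (cm C b) by case: sB.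
have AinAB : vincl A AB.
  move=> a ha; split=> //; first exact: in_tensor_True.
  exact: (in_tensor_tsumL (fun x (hx : A x) => hx) (hA a ha)).
have BinAB : vincl B AB.
  move=> b hb; split=> //; first exact: in_tensor_True.
  exact: (in_tensor_tsumR (fun x (hx : B x) => hx) (hB b hb)).
split; first by move=> S sS hS; exact: partA sA sB sS hS.
move=> S T sS hS sT hT.
have hSc : forall s, S s -> in_tensor S S (cm C s) by case: sS => [[]].
have hTc : forall t, T t -> in_tensor T T (cm C t) by case: sT => [[]].
have sSp : subspace S by case: sS => [[]].
have sTp : subspace T by case: sT => [[]].
have sSc : subcoalg C S by case: sS.
have sTc : subcoalg C T by case: sT.
have ce0 : ce C 0 = 0 by exact: lfun0 (ce_lin C).
split.
{
  move=> nSA nTB.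
  have zSA := simple_zero sS sA nSA; have zTB := simple_zero sT sB nTB.
  have SB : vincl S B by case: (partA sA sB sS hS).
  have TA : vincl T A by case: (partA sA sB sT hT) => // h; exfalso.
  split; last by move=> x hs ht; exact: zTB x ht (SB x hs).
  move=> c; split.
  - move=> [hAB _ hst].
    apply: (closedness (vsum_subspace sSp sTp)) => h lh ph.
    have phS : perp S h.
      by move=> s hs; apply: ph; exists s, 0; split=> //; split; [case: sTp | rewrite addr0].
    have phT : perp T h.
      by move=> t ht; apply: ph; exists 0, t; split; [case: sSp | split=> //; rewrite add0r].
    rewrite (counitR C _ lh).
    have [i2 [be [li2 lbe pi2 pbe e]]] :=
      decomp sTp (sub_subspace sB) (ce_lin C) (fun y a b => etrans (f_equal _ (zTB y a b)) ce0).
    rewrite (tpair_splitr _ _ e) (hst h i2) // add0r.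
    have lhb := conv_lin C lh lbe.
    rewrite -/(conv C h be c) (counitL C _ lhb).
    have [i1 [al [li1 lal pi1 pal e']]] :=
      decomp sSp (sub_subspace sA) (ce_lin C) (fun y a b => etrans (f_equal _ (zSA y a b)) ce0).
    rewrite (tpair_splitl _ _ e') (hst i1 (conv C h be)) // ?add0r; last first.
      by move=> t ht; rewrite /conv; apply: hTc => //; left.
    rewrite coassoc //.
    have [_ _ tAB] := hAB; apply: tAB => //; first exact: conv_lin.
    by move=> a ha; rewrite /conv; apply: hA => //; left.
  - move=> [s [t [hs [ht ->]]]]; split.
    + split=> //; first exact: in_tensor_True.
      apply: in_tsum_add.
      * exact: (in_tensor_tsumR SB (hSc s hs)).
      * exact: (in_tensor_tsumL TA (hTc t ht)).
    + apply: in_tensor_add.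
      * exact: (in_tensor_mono hS hS (hSc s hs)).
      * exact: (in_tensor_mono hT hT (hTc t ht)).
    + apply: in_tsum_add.
      * exact: (in_tensor_tsumL (fun x (hx : S x) => hx) (hSc s hs)).
      * exact: (in_tensor_tsumR (fun x (hx : T x) => hx) (hTc t ht)). }
split.
{
  move=> SA TB c; split.
  - by move=> [_ _ hst]; split=> //; exact: in_tensor_True.
  - move=> [_ _ hst]; split.
    + split=> //; first exact: in_tensor_True.
      exact: (in_tsum_mono SA TB hst).
    + apply: (in_tensor_mono _ _ (wedge_coalg sSc sTc hst)).
      * move=> d [_ _ hd]; split=> //; first exact: in_tensor_True.
        exact: (in_tsum_mono SA TB hd).
      * move=> d [_ _ hd]; split=> //; first exact: in_tensor_True.
        exact: (in_tsum_mono SA TB hd).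
    + exact: hst. }
split.
{
  move=> SA nTB.
  have zTB := simple_zero sT sB nTB.
  move=> c; split.
  - move=> [hAB _ hst].
    have Ac : A c.
      apply: (closedness (sub_subspace sA)) => f lf pf.
      rewrite (counitR C _ lf).
      have [e1 [e2 [l1 l2 p1 p2 e]]] :=
        decomp sTp (sub_subspace sB) (ce_lin C) (fun y a b => etrans (f_equal _ (zTB y a b)) ce0).
      rewrite (tpair_splitr _ _ e) (hst f e1) // ?add0r; last by move=> s hs; apply: pf; apply: SA.
      by have [_ _ tAB] := hAB; apply: tAB.
    by split=> //; apply: hA.
  - move=> [Ac hAA hst]; split=> //.
    + exact: AinAB.
    + exact: (in_tensor_mono AinAB AinAB hAA). }
{
  move=> nSA TB.
  have zSA := simple_zero sS sA nSA.
  move=> c; split.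
  - move=> [hAB _ hst].
    have Bc : B c.
      apply: (closedness (sub_subspace sB)) => f lf pf.
      rewrite (counitL C _ lf).
      have [e1 [e2 [l1 l2 p1 p2 e]]] :=
        decomp sSp (sub_subspace sA) (ce_lin C) (fun y a b => etrans (f_equal _ (zSA y a b)) ce0).
      rewrite (tpair_splitl _ _ e) (hst e1 f) // ?add0r; last by move=> t ht; apply: pf; apply: TB.
      by have [_ _ tAB] := hAB; apply: tAB.
    by split=> //; apply: hB.
  - move=> [Bc hBB hst]; split=> //.
    + exact: BinAB.
    + exact: (in_tensor_mono BinAB BinAB hBB). }
Qed.
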